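(* Let $r\ge 1$ be an integer and let $A$ and $B$ be disjoint vertex sets with $|B|\le |A|/r^{r+3}$. Suppose the edges of the complete bipartite graph between $A$ and $B$ are $r$-locally coloured. Then all vertices of $B$ can be covered by at most $r^2$ vertex-disjoint monochromatic cycles of this bipartite graph.
   Context: An edge colouring of a graph is an $r$-local colouring if the edges incident to any vertex are coloured with at most $r$ colours; the total number of colours is not restricted. A cycle is monochromatic if all its edges have the same colour; a single vertex and a single edge are also considered to be cycles. *)

(* Defs.v *)
From mathcomp Require Import all_boot.
Set Implicit Arguments. Unset Strict Implicit. Unset Printing Implicit Defensive.

Section Bip.
Variables (A B : finType) (C : eqType).

(* The complete bipartite graph between A and B has vertex set A + B
   (disjoint union); an edge colouring assigns a colour c a b to each
   edge ab, a : A, b : B. *)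

Definition bip_edge (c : A -> B -> C) (k : C) : rel (A + B) :=
  fun x y => match x, y with
             | inl a, inr b => c a b == k
             | inr b, inl a => c a b == k
             | _, _ => false
             end.

Definition r_local (r : nat) (c : A -> B -> C) : Prop :=
  (forall a : A, size (undup [seq c a b | b <- enum B]) <= r) /\
  (forall b : B, size (undup [seq c a b | a <- enum A]) <= r).

(* s is a monochromatic cycle of colour k: a single vertex, a single
   edge (s = [:: x; y] with xy an edge of colour k), or a genuine cycle
   x1 x2 ... xn x1 of distinct vertices all of whose edges have colour k. *)
Definition mono_cycle (c : A -> B -> C) (k : C) (s : seq (A + B)) : bool :=
  uniq s && ((size s == 1) || ((1 < size s) && cycle (bip_edge c k) s)).

Definition disjoint_mono_cycles (c : A -> B -> C) (P : seq (seq (A + B))) : Prop :=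
  (forall s, s \in P -> exists k, mono_cycle c k s) /\ uniq (flatten P).

End Bip.

(* Main.v *)
From mathcomp Require Import all_boot zify.
Require Import Defs.
Set Implicit Arguments. Unset Strict Implicit. Unset Printing Implicit Defensive.

Section Posa.
Variable T : finType.
Variable adj : rel T.
Hypothesis adj_sym : symmetric adj.
Hypothesis adj_irr : irreflexive adj.

Lemma uniq_card (s : seq T) : uniq s -> #|s| = size s.
Proof. by move/card_uniqP. Qed.

Definition gcyc (s : seq T) : bool :=
  uniq s && ((size s == 1) || ((1 < size s) && cycle adj s)).

Lemma cut_lemma y q : exists j, [/\ j <= size q,
   (0 < j -> adj y (last y (take j q))) &
   (forall w, w \in drop j q -> ~~ adj y w)].
Proof.
elim: q => [|x q [j [hj hl hd]]]; first by exists 0.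
case: (posnP j) => [j0|jpos].
  subst j. case hyx: (adj y x).
    exists 1; split; rewrite //=; try by rewrite take0.
  exists 0; split => // w; rewrite drop0 inE => /orP [/eqP -> | wq]; first by rewrite hyx.
  by apply: hd; rewrite drop0.
exists j.+1; split => //=.
move=> _; move: (hl jpos).
case E: (take j q) => [|z t]; last by [].
have : size (take j q) = j by rewrite size_take; case: ltnP => //; lia.
by rewrite E /=; lia.
Qed.

Lemma extend_path (X : {set T}) m y q :
  #|X| - size q <= m -> path adj y q -> uniq (y :: q) -> all (mem X) (y :: q) ->
  exists y' q', [/\ path adj y' q', uniq (y' :: q'), all (mem X) (y' :: q') &
     forall w, w \in X -> adj y' w -> w \in y' :: q'].
Proof.
elim: m y q => [|m IH] y q hm hp hu ha.
  have : size (y :: q) <= #|X|.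
    rewrite -(uniq_card hu); apply: subset_leq_card; apply/subsetP => z hz.
    by move/allP: ha => /(_ z hz).
  move=> /=; lia.
case: (boolP [exists w in X, adj y w && (w \notin y :: q)]).
  case/exists_inP => w wX /andP [hyw hwn].
  apply: (IH w (y :: q)).
  - have : size (y :: q) <= #|X|.
      rewrite -(uniq_card hu); apply: subset_leq_card; apply/subsetP => z hz.
      by move/allP: ha => /(_ z hz).
    move=> /=; lia.
  - by rewrite /= adj_sym hyw hp.
  - by apply/andP.
  - by apply/andP; split.
move=> hn; exists y, q; split => // w wX hyw.
apply: contraNT hn => hwn; apply/exists_inP; exists w => //; by rewrite hyw hwn.
Qed.

Definition indep (I : {set T}) := forall x y, x \in I -> y \in I -> ~~ adj x y.

Lemma posa n (X : {set T}) : #|X| <= n ->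
  exists P : seq (seq T), [/\ all gcyc P, uniq (flatten P),
    (forall x, (x \in flatten P) = (x \in X)) &
    exists I : {set T}, [/\ I \subset X, indep I & size P = #|I|]].
Proof.
elim: n X => [|n IH] X hX.
  exists [::]; split => //=.
    by move=> x; move: hX; rewrite leqn0 => /eqP/cards0_eq ->; rewrite inE.
  by exists set0; split => //; rewrite ?sub0set ?cards0 // => x y; rewrite inE.
case: (set_0Vmem X) => [-> | [x xX]].
  exists [::]; split => //=; first by move=> z; rewrite inE.
  by exists set0; split => //; rewrite ?sub0set ?cards0 // => z y; rewrite inE.
have hax : all (mem X) [:: x] by rewrite /= andbT.
have [y [q [hp hu ha hnb]]] := @extend_path X #|X| x [::] (leq_subr _ _) isT isT hax.
have [j [hj hl hd]] := cut_lemma y q.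
set s := y :: take j q.
have hsX : forall z, z \in s -> z \in X.
  move=> z; rewrite /s inE => /orP [/eqP -> | hz]; move/allP: ha; apply; rewrite inE ?eqxx //.
  by rewrite (mem_take hz) orbT.
set X' := X :\: [set z | z \in s].
have hX' : #|X'| <= n.
  have : #|X'| < #|X|.
    apply: proper_card; rewrite properE; apply/andP; split; first by apply/subsetP => z; rewrite inE => /andP [].
    apply/negP => /subsetP /(_ y) H.
    have yX : y \in X by apply: hsX; rewrite inE eqxx.
    by move: (H yX); rewrite !inE eqxx.
  lia.
have [P' [hP'c hP'u hP'f [I' [hI'X hI'i hI's]]]] := IH X' hX'.
have hus : uniq s.
  move: hu => /= /andP [hyq hq]; apply/andP; split; last exact: take_uniq.
  by apply: contra hyq; apply: mem_take.
exists (s :: P'); split.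
- rewrite /= hP'c andbT /gcyc.
  rewrite hus /=.
  case: (posnP j) => [j0 | jpos]; first by rewrite j0 take0.
  have sz : size (take j q) = j by rewrite size_take; case: ltnP => //; lia.
  rewrite sz ltnS jpos /= rcons_path adj_sym (hl jpos) andbT orbC.
  by move: hp; rewrite -{1}(cat_take_drop j q) cat_path => /andP [-> _].
- change (uniq (s ++ flatten P')); rewrite cat_uniq hP'u andbT hus /=.
  apply/hasPn => z; rewrite hP'f !inE => /andP [hz _]; exact: hz.
- move=> z; change ((z \in s ++ flatten P') = (z \in X)).
  rewrite mem_cat hP'f in_setD in_set.
  by case: (boolP (z \in s)) => hz //=; rewrite hsX.
- exists (y |: I'); split.
  + rewrite subUset sub1set (hsX y) ?inE ?eqxx //.
    by apply: subset_trans hI'X (subsetDl _ _).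
  + have hy : forall w, w \in I' -> ~~ adj y w.
      move=> w wI; apply/negP => hyw.
      move/subsetP: hI'X => /(_ w wI); rewrite !inE => /andP [hws wX].
      move: (hnb w wX hyw); rewrite inE => /orP [/eqP wy | wq].
        by move: hyw; rewrite wy adj_irr.
      move: wq; rewrite -(cat_take_drop j q) mem_cat => /orP [wt | wd].
        by move: hws; rewrite wt orbT.
      by move: (hd w wd); rewrite hyw.
    move=> a b; rewrite !inE => /orP [/eqP -> | aI] /orP [/eqP -> | bI].
    * by rewrite adj_irr.
    * exact: hy.
    * by rewrite adj_sym; apply: hy.
    * exact: hI'i.
  + rewrite cardsU1 /= hI's.
    suff -> : y \notin I' by [].
    apply/negP => yI; move/subsetP: hI'X => /(_ y yI); rewrite !inE eqxx; by [].
Qed.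
End Posa.

Lemma card_bigcup_le (T I : finType) (P : pred I) (F : I -> {set T}) :
  #|\bigcup_(i | P i) F i| <= \sum_(i | P i) #|F i|.
Proof.
apply: (big_ind2 (fun (X : {set T}) n => #|X| <= n)).
- by rewrite cards0.
- move=> X1 n1 X2 n2 h1 h2; apply: leq_trans (leq_card_setU X1 X2).1 _.
  exact: leq_add.
- by [].
Qed.

Lemma card_sum_ind (T : finType) (S : {set T}) : #|S| = \sum_(a : T) (a \in S).
Proof.
by rewrite -sum1_card big_mkcond /=; apply: eq_bigr => a _; case: (a \in S).
Qed.

Lemma arith (r n m X p : nat) : 1 <= r -> 1 <= m ->
  ((r * r).+1) * n <= r * (r * n + (m - 1) * X) ->
  2 * X <= (r * r).+1 * (r * r) ->
  m * (p * (r * (r * r))) <= n ->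
  (r * r).+1 <= 2 * p -> False.
Proof.
move=> hr hm H HX Hn hp.
have h1 : n <= r * ((m - 1) * X) by nia.
have h2 : 2 * n <= r * ((m - 1) * ((r * r).+1 * (r * r))).
  apply: leq_trans (_ : 2 * (r * ((m - 1) * X)) <= _); first by nia.
  rewrite mulnCA; rewrite leq_mul2l; apply/orP; right. rewrite mulnCA leq_mul2l; apply/orP; right. done.
have h3 : m * ((r * r).+1 * (r * (r * r))) <= 2 * n.
  apply: leq_trans (_ : 2 * (m * (p * (r * (r * r)))) <= _); last by rewrite leq_mul2l Hn orbT.
  nia.
nia.
Qed.

Lemma pow_rr r : 1 <= r -> (r * r).+1 <= 2 * r ^ r.
Proof.
move=> hr; case: (ltnP r 2) => h2.
  have -> : r = 1 by lia.
  by [].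
have : r ^ 2 <= r ^ r by apply: leq_pexp2l => //; lia.
rewrite expnS expn1; nia.
Qed.

Section Col.
Variables (A B : finType) (C : eqType) (c : A -> B -> C) (r : nat).
Hypothesis hloc : r_local r c.
Variable a0 : A.

Definition cls b a := [set a' | c a' b == c a b].
Definition amax b := [arg max_(a > a0) #|cls b a|].
Definition kk b := c (amax b) b.
Definition NN b := [set a | c a b == kk b].
Definition mB := #|B|.
Definition adjB : rel B := fun b b' => [&& b != b', kk b == kk b' & mB <= #|NN b :&: NN b'|].

Lemma cls_le b a : #|cls b a| <= #|NN b|.
Proof. rewrite /NN /kk /amax; case: arg_maxnP => // i _ H; exact: H. Qed.

Lemma NN_big b : #|A| <= r * #|NN b|.
Proof.
set Cls := [set cls b a | a : A].
have cov : cover Cls = setT.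
  apply/setP => a; rewrite inE; apply/bigcupP; exists (cls b a); first exact: imset_f.
  by rewrite inE.
have h1 : #|A| <= \sum_(X in Cls) #|X|.
  by rewrite -cardsT -cov; exact: (leq_card_cover Cls).1.
have h2 : \sum_(X in Cls) #|X| <= \sum_(X in Cls) #|NN b|.
  by apply: leq_sum => X /imsetP [a _ ->]; exact: cls_le.
rewrite sum_nat_const in h2.
have h3 : #|Cls| <= r.
  set cols := undup [seq c a b | a <- enum A].
  have : #|Cls| <= size [seq [set a' | c a' b == k] | k <- cols].
    apply: leq_trans (card_size _); apply: subset_leq_card.
    apply/subsetP => X /imsetP [a _ ->]; apply/mapP; exists (c a b) => //.
    by rewrite mem_undup; apply/mapP; exists a => //; rewrite mem_enum.
  rewrite size_map => h; apply: leq_trans h _; exact: hloc.2 b.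
apply: leq_trans h1 (leq_trans h2 _); exact: leq_mul h3 (leqnn _).
Qed.

Lemma adjB_sym : symmetric adjB.
Proof. by move=> x y; rewrite /adjB eq_sym [kk x == _]eq_sym setIC. Qed.

Lemma adjB_irr : irreflexive adjB.
Proof. by move=> x; rewrite /adjB eqxx. Qed.


Lemma indep_small (e : seq B) (b0 : B) : uniq e ->
  (forall x y, x \in e -> y \in e -> ~~ adjB x y) ->
  size e * #|A| <= r * (r * #|A| + (mB - 1) * 'C(size e, 2)).
Proof.
move=> he hind.
set s := size e.
pose E (i : 'I_s) := nth b0 e i.
pose U (i : 'I_s) := \bigcup_(j < s | (j < i) && (kk (E j) == kk (E i))) NN (E j).
pose D (i : 'I_s) := NN (E i) :\: U i.
have EinE : forall i, E i \in e by move=> i; apply: mem_nth.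
have Einj : forall i j, E i = E j -> i = j.
  move=> i j h; apply: ord_inj; apply/eqP.
  by rewrite -(nth_uniq b0 (ltn_ord i) (ltn_ord j) he); apply/eqP.
have sA : s * #|A| <= r * \sum_(i < s) #|NN (E i)|.
  rewrite big_distrr /=.
  have -> : s * #|A| = \sum_(i < s) #|A| by rewrite sum_nat_const card_ord.
  by apply: leq_sum => i _; exact: NN_big.
have split : \sum_(i < s) #|NN (E i)| =
   \sum_(i < s) #|D i| + \sum_(i < s) #|NN (E i) :&: U i|.
  rewrite -big_split /=; apply: eq_bigr => i _; by rewrite addnC cardsID.
have bD : \sum_(i < s) #|D i| <= r * #|A|.
  have -> : \sum_(i < s) #|D i| = \sum_(a : A) #|[set i : 'I_s | a \in D i]|.
    transitivity (\sum_(i < s) \sum_(a : A) (a \in D i)).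
      by apply: eq_bigr => i _; rewrite card_sum_ind.
    rewrite exchange_big /=; apply: eq_bigr => a _; rewrite card_sum_ind.
    by apply: eq_bigr => i _; rewrite in_set.
  apply: (@leq_trans (\sum_(a : A) r)); last by rewrite sum_nat_const mulnC.
  apply: leq_sum => a _.
  set S := [set i : 'I_s | a \in D i].
  have inj : {in S &, injective (fun i => kk (E i))}.
    have key : forall i j, i \in S -> j \in S -> kk (E i) = kk (E j) -> j < i -> False.
      move=> i j; rewrite !inE => /andP [hUi _] /andP [_ haj] hk hji.
      move/negP: hUi; apply; apply/bigcupP; exists j; first by rewrite hji /= hk.
      by rewrite inE.
    move=> i j hi hj hk.
    case: (ltngtP i j) => h.
    - by case: (key j i hj hi (esym hk) h).
    - by case: (key i j hi hj hk h).
    - exact: ord_inj.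
  have hsub : {subset [seq kk (E i) | i <- enum S] <= undup [seq c a b | b <- enum B]}.
    move=> k /mapP [i]; rewrite mem_enum !inE => /andP [_ /eqP hc] ->.
    by rewrite mem_undup; apply/mapP; exists (E i); rewrite ?mem_enum.
  apply: leq_trans (hloc.1 a).
  rewrite cardE -(size_map (fun i => kk (E i))).
  apply: uniq_leq_size hsub.
  by rewrite map_inj_in_uniq ?enum_uniq // => i j; rewrite !mem_enum; apply: inj.
have bI : \sum_(i < s) #|NN (E i) :&: U i| <= (mB - 1) * 'C(s, 2).
  have hi : forall i : 'I_s, #|NN (E i) :&: U i| <= i * (mB - 1).
    move=> i.
    have sub : NN (E i) :&: U i \subset
       \bigcup_(j < s | (j < i) && (kk (E j) == kk (E i))) (NN (E i) :&: NN (E j)).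
      apply/subsetP => a; rewrite inE => /andP [aN /bigcupP [j hj aj]].
      by apply/bigcupP; exists j => //; rewrite inE aN aj.
    apply: leq_trans (subset_leq_card sub) _.
    apply: leq_trans (card_bigcup_le _ _) _.
    apply: (@leq_trans (\sum_(j < s | j < i) (mB - 1))).
      rewrite [X in _ <= X]big_mkcond [X in X <= _]big_mkcond /=; apply: leq_sum => j _.
      case hji: (j < i) => //=; case hk: (kk (E j) == kk (E i)) => //=.
      have := hind (E i) (E j) (EinE i) (EinE j); rewrite /adjB.
      have hne : E i != E j.
        apply/negP => /eqP /Einj hij; move: hji; rewrite hij ltnn //.
      rewrite hne eq_sym hk /=; lia.
    rewrite -(big_ord_widen _ (fun _ => mB - 1) (ltnW (ltn_ord i))).
    by rewrite sum_nat_const card_ord.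
  apply: (@leq_trans (\sum_(i < s) i * (mB - 1))); first by apply: leq_sum => i _; exact: hi.
  by rewrite -big_distrl /= -bin2_sum big_mkord mulnC.
rewrite split in sA.
apply: leq_trans sA _; rewrite leq_mul2l; apply/orP; right.
exact: leq_add.
Qed.


Lemma indep_le (I : {set B}) : 1 <= r -> mB * r ^ (r + 3) <= #|A| ->
  (forall x y, x \in I -> y \in I -> ~~ adjB x y) -> #|I| <= r ^ 2.
Proof.
move=> hr hn hind; rewrite leqNgt; apply/negP => hlt.
have [b0 _] : exists b0, b0 \in I.
  by apply/card_gt0P; apply: leq_ltn_trans hlt.
set e := take (r ^ 2).+1 (enum I).
have hs : size e = (r ^ 2).+1 by rewrite size_takel // -cardE.
have := @indep_small e b0 (take_uniq _ (enum_uniq (mem I))).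
rewrite hs => H.
have hmem : forall x, x \in e -> x \in I by move=> x /mem_take; rewrite mem_enum.
have H' := H (fun x y hx hy => hind x y (hmem x hx) (hmem y hy)).
have hm : 1 <= mB by rewrite /mB; apply/card_gt0P; exists b0.
have HX : 2 * 'C((r ^ 2).+1, 2) <= (r ^ 2).+1 * (r ^ 2).
  rewrite bin2 /=; have := odd_double_half ((r ^ 2).+1 * r ^ 2).
  rewrite -muln2; lia.
move: H' HX hn; rewrite !expnD.
have := pow_rr hr.
rewrite /expn /= => hp H' HX hn.
exact: (arith hr hm H' HX hn hp).
Qed.


Definition inU (U : {set A}) (t : seq B) (v : A + B) : bool :=
  match v with inl a => a \notin U | inr b => b \in t end.

Lemma inU_w (U U' : {set A}) (t t' : seq B) v : U \subset U' -> {subset t <= t'} -> inU U' t v -> inU U t' v.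
Proof.
move=> hU ht; case: v => [a|b] /=; last exact: ht.
by apply: contra; apply: (subsetP hU).
Qed.

Lemma pick_a x y (U : {set A}) : adjB x y -> #|U| < mB ->
  exists a, [/\ a \notin U, c a x == kk x & c a y == kk x].
Proof.
case/and3P => _ /eqP hk hm hU.
set S := NN x :&: NN y.
rewrite -/S in hm.
have : 0 < #|S :\: U|.
  rewrite cardsD.
  have : #|S :&: U| <= #|U| by apply: subset_leq_card; apply: subsetIr.
  lia.
case/card_gt0P => a; rewrite !inE => /and3P [haU /eqP h1 /eqP h2].
by exists a; rewrite haU h1 h2 hk eqxx.
Qed.

Lemma build (z : B) (t : seq B) : forall x (U : {set A}), path adjB x t ->
  adjB (last x t) z -> uniq (x :: t) -> #|U| + size t + 1 <= mB ->
  exists s'' : seq (A + B),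
    [/\ path (bip_edge c (kk x)) (inr x) (rcons s'' (inr z)), uniq s'',
        all (inU U t) s'', (forall b, b \in t -> inr b \in s'')
      & #|[set a | inl a \in s'']| <= size t + 1].
Proof.
elim: t => [|y t IH] x U /= hp hlast hu hsz.
  have hU' : #|U| < mB by lia.
  have [a [haU h1 h2]] := pick_a hlast hU'.
  exists [:: inl a]; split => //=.
  - by rewrite h1 h2.
  - by rewrite haU.
  - apply: leq_trans (_ : #|[set a]| <= 1); last by rewrite cards1.
    by apply: subset_leq_card; apply/subsetP => a'; rewrite !inE.
case/andP: hp => hxy hp.
have hU' : #|U| < mB by lia.
have [a [haU h1 h2]] := pick_a hxy hU'.
move: hu => /andP [hx /andP [hy ht]].
have hu' : uniq (y :: t) by rewrite /= hy.
have hsz' : #|a |: U| + size t + 1 <= mB by rewrite cardsU1 haU /=; lia.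
have [s1 [p1 u1 a1 c1 k1]] := IH y (a |: U) hp hlast hu' hsz'.
  exists [:: inl a, inr y & s1]; split.
  + have hk : kk y = kk x by move: hxy => /and3P [_ /eqP -> _].
    by rewrite /= h1 h2 -hk p1.
  + rewrite /= u1 andbT; apply/andP; split.
      rewrite inE negb_or /=; apply/negP => ha.
      by have := allP a1 _ ha; rewrite /= in_setU1 eqxx.
    by apply/negP => hy1; move/allP: a1 => /(_ _ hy1) /=; rewrite (negbTE hy).
  + rewrite /= haU inE eqxx /=.
    apply/allP => v hv; move/allP: a1 => /(_ v hv).
    apply: inU_w; first by apply/subsetP => a'; rewrite inE => ->; rewrite orbT.
    by move=> b hb; rewrite inE hb orbT.
  + move=> b; rewrite inE => /orP [/eqP -> | hb]; first by rewrite !inE eqxx orbT.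
    by rewrite !inE (c1 _ hb) !orbT.
  + apply: leq_trans (_ : #|a |: [set a' | inl a' \in s1]| <= _).
      apply: subset_leq_card; apply/subsetP => a'; rewrite in_set in_setU1 in_set !in_cons.
      by case/or3P => [/eqP [->] | /eqP // | ->]; rewrite ?eqxx ?orbT.
    rewrite cardsU1 addnC -addn1; apply: leq_add => //; exact: leq_b1.
Qed.


Lemma conv1 (s : seq B) (U : {set A}) : gcyc adjB s -> #|U| + size s <= mB ->
  exists s', [/\ exists k, mono_cycle c k s', all (inU U s) s',
     (forall b, b \in s -> inr b \in s') & #|[set a | inl a \in s']| <= size s].
Proof.
case: s => [|x t]; first by rewrite /gcyc.
case: t => [|y t] hg hsz.
  exists [:: inr x]; split.
  - by exists (kk x).
  - by rewrite /= in_cons eqxx.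
  - by move=> b; rewrite in_cons in_nil orbF => /eqP ->; rewrite in_cons eqxx.
  - rewrite (_ : [set a | inl a \in [:: inr x]] = set0) ?cards0 //.
move: hg => /andP [hu /orP [//|/andP [_ hc]]].
have hc' : path adjB x (rcons (y :: t) x) by exact: hc.
rewrite rcons_path in hc'; case/andP: hc' => hp' hlast.
have hsz' : #|U| + size (y :: t) + 1 <= mB by move: hsz; rewrite -addnA addn1.
have [s'' [p1 u1 a1 c1 k1]] := build hp' hlast hu hsz'.
case: s'' p1 u1 a1 c1 k1 => [|v s''] p1 u1 a1 c1 k1; first by move: p1 => /=.
have hxn : inr x \notin v :: s''.
  apply/negP => hx; have := allP a1 _ hx => /= hxt.
  by move: hu; rewrite /= hxt.
exists [:: inr x, v & s'']; split.
- exists (kk x); rewrite /mono_cycle.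
  apply/andP; split; first by rewrite cons_uniq hxn u1.
  by apply/orP; right; apply/andP; split.
- apply/allP => w; rewrite in_cons => /orP [/eqP -> | hw]; first by rewrite /= in_cons eqxx.
  apply: inU_w (allP a1 w hw); first exact: subxx.
  by move=> b hb; rewrite in_cons hb orbT.
- move=> b; rewrite in_cons => /orP [/eqP -> | hb]; first by rewrite in_cons eqxx.
  by rewrite in_cons (c1 _ hb) orbT.
- apply: (@leq_trans #|[set a | inl a \in v :: s'']|); last by rewrite addn1 in k1.
  apply: subset_leq_card; apply/subsetP => a; rewrite !in_set in_cons.
  by case/orP => [/eqP // | ->].
Qed.

Lemma conv (P : seq (seq B)) : forall U : {set A}, all (gcyc adjB) P ->
  uniq (flatten P) -> #|U| + size (flatten P) <= mB ->
  exists P' : seq (seq (A + B)), [/\ size P' = size P,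
    forall s', s' \in P' -> exists k, mono_cycle c k s', uniq (flatten P'),
    all (inU U (flatten P)) (flatten P') &
    forall b, b \in flatten P -> inr b \in flatten P'].
Proof.
elim: P => [|s P IH] U /=.
  by move=> _ _ _; exists [::]; split.
move=> /andP [hs hP] hu hsz.
rewrite size_cat in hsz.
have hsz1 : #|U| + size s <= mB.
  by apply: leq_trans hsz; rewrite leq_add2l leq_addr.
have [s' [[k hk] a1 c1 k1]] := conv1 hs hsz1.
set W := [set a | inl a \in s'].
move: hu; rewrite cat_uniq => /and3P [us hdis uP].
have hsz2 : #|U :|: W| + size (flatten P) <= mB.
  apply: leq_trans hsz; rewrite addnA leq_add2r.
  apply: leq_trans (leq_card_setU U W).1 _; by rewrite leq_add2l.
have [P0 [e0 m0 u0 a0' c0]] := IH (U :|: W) hP uP hsz2.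
exists (s' :: P0); split.
- by rewrite /= e0.
- move=> s1; rewrite in_cons => /orP [/eqP -> | h]; [by exists k | exact: m0].
- rewrite /= cat_uniq u0 andbT; apply/andP; split; first by case/andP: hk.
  apply/hasPn => v hv; apply/negP => hv'.
  have h1 := allP a0' v hv.
  have h2 := allP a1 v hv'.
  case: v hv hv' h1 h2 => [a|b] /= hv hv' h1 h2.
    by move: h1; rewrite in_setU in_set hv' orbT.
  by move/hasPn: hdis => /(_ b h1); rewrite h2.
- rewrite /= all_cat; apply/andP; split.
    apply/allP => v hv; apply: inU_w (allP a1 v hv); first exact: subxx.
    by move=> b hb; rewrite mem_cat hb.
  apply/allP => v hv; apply: inU_w (allP a0' v hv); first exact: subsetUl.
  by move=> b hb; rewrite mem_cat hb orbT.
- move=> b; rewrite mem_cat => /orP [hb | hb]; rewrite /= mem_cat.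
    by rewrite (c1 _ hb).
  by rewrite (c0 _ hb) orbT.
Qed.

End Col.

Theorem lemma2p2 (r : nat) (A B : finType) (C : eqType) (c : A -> B -> C) :
  1 <= r ->
  #|B| * r ^ (r + 3) <= #|A| ->
  r_local r c ->
  exists P : seq (seq (A + B)),
    [/\ disjoint_mono_cycles c P,
        size P <= r ^ 2 &
        forall b : B, exists2 s, s \in P & inr b \in s].
Proof.
move=> hr hcard hloc.
case: (posnP #|B|) => hB.
  exists [::]; split => //.
  by move=> b; move: hB => /card0_eq /(_ b); rewrite inE.
have hA : 0 < #|A|.
  apply: leq_trans hcard; rewrite muln_gt0 hB expn_gt0 /=; by rewrite hr.
case/card_gt0P: hA => a0 _.
have [P [hPc hPu hPf [I [_ hIi hIs]]]] :=
  posa (adjB_sym c a0) (adjB_irr c a0) (leqnn #|[set: B]|).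
have hI : #|I| <= r ^ 2.
  by apply: (indep_le hloc hr hcard) => x y hx hy; apply: hIi.
have hsz : #|@set0 A| + size (flatten P) <= mB B.
  by rewrite cards0 add0n /mB -(uniq_card hPu); exact: max_card.
have [P' [e m u _ cov]] := conv hPc hPu hsz.
exists P'; split.
- by split.
- by rewrite e hIs.
- move=> b; have : b \in flatten P by rewrite hPf inE.
  by move/cov/flattenP.
Qed.
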